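(* Let $0<\kappa<1$. For $\phi$ near $0$ define $$u(\phi)=\int_0^{\phi} F\!\left(\tfrac14,\tfrac34;\tfrac12;\kappa^2\sin^2\theta\right)\,\mathrm{d}\theta ,$$ let $u\mapsto\phi(u)$ be the local inverse near $0$ with $\phi(0)=0$, let $\psi=\psi(u)$ be defined near $u=0$ with $\psi(0)=0$ and $\sin\psi=\kappa\sin\phi$, and set $d=\cos\psi$. Then, near $u=0$, $$d'=-2\kappa\sin\tfrac12\psi\,\cos\phi,$$ where $'$ denotes differentiation with respect to $u$.
   Context: $F(a,b;c;z)$ denotes the Gauss hypergeometric function ${}_2F_1(a,b;c;z)$. *)

(* Defs.v *)
From Stdlib Require Import Reals Lra.
From Coquelicot Require Import Coquelicot.
Open Scope R_scope.

Fixpoint poch (a : R) (n : nat) : R :=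
  match n with
  | O => 1
  | S m => poch a m * (a + INR m)
  end.

Definition hyp2F1 (a b c z : R) : R :=
  Series (fun n => poch a n * poch b n / (poch c n * INR (Factorial.fact n)) * z ^ n).

Definition u_of (kappa phi : R) : R :=
  RInt (fun theta => hyp2F1 (1/4) (3/4) (1/2) (kappa ^ 2 * (sin theta) ^ 2)) 0 phi.

(* Main.v *)
Require Import Defs.
From Stdlib Require Import Reals Lra Lia.
From Coquelicot Require Import Coquelicot.
Open Scope R_scope.

Definition ca (n : nat) : R := poch (1/2) n / INR (Factorial.fact n).

Lemma poch_pos a n : 0 < a -> 0 < poch a n.
Proof. intros Ha; induction n; simpl. lra. apply Rmult_lt_0_compat; auto.
  pose proof (pos_INR n); lra. Qed.

Lemma fact_pos n : 0 < INR (Factorial.fact n).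
Proof. apply lt_0_INR, Factorial.lt_O_fact. Qed.

Lemma ca_S n : ca (S n) = ca n * (1/2 + INR n) / INR (S n).
Proof. unfold ca. simpl poch. change (Factorial.fact (S n)) with (S n * Factorial.fact n)%nat.
  rewrite mult_INR. pose proof (fact_pos n). pose proof (pos_INR n).
  rewrite S_INR. field. lra. Qed.

Lemma ca_bound n : 0 < ca n <= 1.
Proof. induction n. unfold ca; simpl; lra.
  rewrite ca_S. pose proof (pos_INR n). rewrite S_INR.
  split. apply Rdiv_lt_0_compat; [apply Rmult_lt_0_compat|]; lra.
  apply Rmult_le_reg_r with (INR n + 1). lra.
  unfold Rdiv. rewrite Rmult_assoc, Rinv_l by lra. nra. Qed.

Lemma bounded_ex (c : nat -> R) y : (forall n, Rabs (c n) <= 1) -> Rabs y < 1 ->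
  Rbar_lt (Rabs y) (CV_radius c).
Proof. intros Hc Hy. apply Rbar_lt_le_trans with (Finite 1). simpl; lra.
  destruct (CV_radius_bounded c) as [H _]. apply H. exists 1. intros n.
  rewrite pow1, Rmult_1_r. apply Hc. Qed.

Lemma ca_abs n : Rabs (ca n) <= 1.
Proof. destruct (ca_bound n). rewrite Rabs_pos_eq; lra. Qed.

Lemma key_coef (t : R) (Ht : Rabs t < 1) :
  PSeries (PS_derive ca) t * (1 - t) = PSeries ca t / 2.
Proof.
  assert (Hr : Rbar_lt (Rabs t) (CV_radius ca)) by (apply bounded_ex; auto; apply ca_abs).
  assert (E1 := ex_pseries_derive _ _ Hr).
  assert (E2 := ex_pseries_incr_1 _ _ E1).
  replace (PSeries (PS_derive ca) t * (1 - t)) with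
    (PSeries (PS_derive ca) t - PSeries (PS_incr_1 (PS_derive ca)) t)
    by (rewrite PSeries_incr_1; ring).
  rewrite <- PSeries_minus by auto.
  replace (PSeries ca t / 2) with (PSeries (PS_scal (1/2) ca) t)
    by (rewrite PSeries_scal; field).
  apply PSeries_ext. intros n. unfold PS_minus, PS_scal, PS_derive, PS_incr_1.
  rewrite ca_S. simpl scal. unfold mult; simpl.
  unfold plus, opp, scal, mult; simpl. unfold mult; simpl.
  destruct n as [|m].
  - unfold ca, zero; simpl. field.
  - change (match m with 0%nat => 1 | S _ => INR m + 1 end) with (INR (S m)).
    rewrite ca_S. pose proof (pos_INR m). rewrite !S_INR. field. lra.
Qed.

Lemma h_der t : Rabs t < 1 ->
  is_derive (fun x => PSeries ca x * sqrt (1 - x)) t 0.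
Proof.
  intros Ht.
  assert (Hr : Rbar_lt (Rabs t) (CV_radius ca)) by (apply bounded_ex; auto; apply ca_abs).
  assert (Ht' : 0 < 1 - t) by (apply Rabs_def2 in Ht; lra).
  assert (D2 : is_derive (fun x => sqrt (1 - x)) t (- / (2 * sqrt (1 - t)))).
  { auto_derive. lra. change (1 + - t) with (1 - t). ring. }
  pose proof (is_derive_mult _ _ _ _ _ (is_derive_PSeries _ _ Hr) D2 Rmult_comm) as D.
  simpl in D. unfold plus, mult in D; simpl in D.
  replace 0 with (PSeries (PS_derive ca) t * sqrt (1 - t) +
     PSeries ca t * - / (2 * sqrt (1 - t))); [exact D|].
  pose proof (key_coef t Ht) as K.
  assert (Hs : 0 < sqrt (1 - t)) by (apply sqrt_lt_R0; lra).
  pose proof (sqrt_sqrt (1 - t) (Rlt_le _ _ Ht')) as Hss.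
  apply Rmult_eq_reg_r with (sqrt (1 - t)); [|lra].
  field_simplify; [|lra]. rewrite <- Rsqr_pow2; unfold Rsqr; rewrite Hss. rewrite Rmult_assoc, K. field.
Qed.

Lemma binom x : Rabs x < 1 -> PSeries ca x = / sqrt (1 - x).
Proof.
  intros Hx.
  assert (Hx' : 0 < 1 - x) by (apply Rabs_def2 in Hx; lra).
  assert (Hs : 0 < sqrt (1 - x)) by (apply sqrt_lt_R0; lra).
  assert (H0 : PSeries ca 0 * sqrt (1 - 0) = 1).
  { rewrite PSeries_0, Rminus_0_r, sqrt_1. unfold ca; simpl; field. }
  assert (E : PSeries ca x * sqrt (1 - x) = 1).
  { destruct (Rtotal_order x 0) as [Hl|[He|Hg]].
    - rewrite <- H0 at 2. apply (eq_is_derive (fun x => PSeries ca x * sqrt (1 - x))); auto.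
      intros t Ht. apply h_der. apply Rabs_def1; apply Rabs_def2 in Hx; lra.
    - subst; auto.
    - rewrite <- H0 at 2. symmetry. apply (eq_is_derive (fun x => PSeries ca x * sqrt (1 - x))); auto.
      intros t Ht. apply h_der. apply Rabs_def1; apply Rabs_def2 in Hx; lra. }
  apply Rmult_eq_reg_r with (sqrt (1 - x)); [|lra]. rewrite E. field. lra.
Qed.

Lemma coef_eq n : poch (1/4) n * poch (3/4) n / (poch (1/2) n * INR (Factorial.fact n)) = ca (2 * n).
Proof.
  induction n.
  - unfold ca; simpl; field.
  - replace (2 * S n)%nat with (S (S (2 * n))) by lia.
    rewrite !ca_S, <- IHn.
    simpl poch. change (Factorial.fact (S n)) with (S n * Factorial.fact n)%nat.
    rewrite !mult_INR, !S_INR, mult_INR. simpl (INR 2).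
    pose proof (pos_INR n). pose proof (fact_pos n).
    pose proof (poch_pos (1/2) n ltac:(lra)).
    rewrite INR_0. field. repeat split; lra.
Qed.

Lemma hyp_closed x : Rabs x < 1 ->
  hyp2F1 (1/4) (3/4) (1/2) (x ^ 2) = (/ sqrt (1 - x) + / sqrt (1 + x)) / 2.
Proof.
  intros Hx.
  assert (Hx2 : Rabs (x ^ 2) < 1).
  { apply Rabs_def2 in Hx. rewrite Rabs_pos_eq by (apply pow2_ge_0). nra. }
  assert (Hmx : Rabs (- x) < 1) by (rewrite Rabs_Ropp; auto).
  assert (Ee : ex_pseries (fun n => ca (2 * n)) (x ^ 2)).
  { apply CV_radius_inside, bounded_ex; auto. intros; apply ca_abs. }
  assert (Eo : ex_pseries (fun n => ca (2 * n + 1)) (x ^ 2)).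
  { apply CV_radius_inside, bounded_ex; auto. intros; apply ca_abs. }
  assert (Ee' : ex_pseries (fun n => ca (2 * n)) ((- x) ^ 2)) by (replace ((-x)^2) with (x^2) by ring; auto).
  assert (Eo' : ex_pseries (fun n => ca (2 * n + 1)) ((- x) ^ 2)) by (replace ((-x)^2) with (x^2) by ring; auto).
  pose proof (PSeries_odd_even ca x Ee Eo) as H1.
  pose proof (PSeries_odd_even ca (-x) Ee' Eo') as H2.
  replace ((-x)^2) with (x^2) in H2 by ring.
  rewrite binom in H1 by auto. rewrite binom in H2 by auto.
  replace (1 - - x) with (1 + x) in H2 by ring.
  unfold hyp2F1.
  replace (Series (fun n => poch (1/4) n * poch (3/4) n / (poch (1/2) n * INR (Factorial.fact n)) * (x ^ 2) ^ n))
    with (PSeries (fun n => ca (2 * n)) (x ^ 2)).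
  2:{ unfold PSeries. apply Series_ext. intros n. rewrite coef_eq. reflexivity. }
  lra.
Qed.

Definition Hf (x : R) := (/ sqrt (1 - x) + / sqrt (1 + x)) / 2.
Definition Gk (k th : R) := hyp2F1 (1/4) (3/4) (1/2) (k ^ 2 * (sin th) ^ 2).

Lemma ksin_lt k th : 0 < k < 1 -> Rabs (k * sin th) < 1.
Proof. intros Hk. rewrite Rabs_mult, Rabs_pos_eq by lra.
  pose proof (Rabs_le _ _ (SIN_bound th)) as _.
  assert (Rabs (sin th) <= 1) by (apply Rabs_le; apply SIN_bound).
  pose proof (Rabs_pos (sin th)). nra. Qed.

Lemma G_eq k th : 0 < k < 1 -> Gk k th = Hf (k * sin th).
Proof. intros Hk. unfold Gk, Hf. replace (k ^ 2 * sin th ^ 2) with ((k * sin th) ^ 2) by ring.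
  apply hyp_closed, ksin_lt; auto. Qed.

Lemma Hf_pos x : Rabs x < 1 -> 0 < Hf x.
Proof. intros Hx; apply Rabs_def2 in Hx. unfold Hf.
  assert (0 < sqrt (1 - x)) by (apply sqrt_lt_R0; lra).
  assert (0 < sqrt (1 + x)) by (apply sqrt_lt_R0; lra).
  pose proof (Rinv_0_lt_compat _ H). pose proof (Rinv_0_lt_compat _ H0). lra. Qed.

Lemma G_cont k th : 0 < k < 1 -> continuous (Gk k) th.
Proof. intros Hk. apply continuous_ext with (fun t => Hf (k * sin t)).
  intros t; symmetry; apply G_eq; auto.
  apply (ex_derive_continuous (K:=R_AbsRing) (V:=R_NormedModule)). unfold Hf.
  pose proof (ksin_lt k th Hk) as H. apply Rabs_def2 in H.
  auto_derive. repeat split; try lra.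
  apply Rgt_not_eq, sqrt_lt_R0; lra. apply Rgt_not_eq, sqrt_lt_R0; lra. Qed.

Lemma u_der k y : 0 < k < 1 -> is_derive (u_of k) y (Gk k y).
Proof. intros Hk. apply is_derive_RInt with 0.
  apply filter_forall. intros b. unfold u_of. apply (RInt_correct (Gk k)).
  apply ex_RInt_continuous. intros; apply G_cont; auto.
  apply G_cont; auto. Qed.

Lemma inv_der (f g : R -> R) (s r L : R) : 0 < r ->
  (forall t, Rabs (t - s) < r -> f (g t) = t) -> continuous g s ->
  is_derive f (g s) L -> L <> 0 -> is_derive g s (/ L).
Proof.
  intros Hr Hfg Hc Hd HL.
  apply is_derive_Reals in Hd. apply is_derive_Reals.
  apply (proj2 (continuity_pt_filterlim _ _)) in Hc.
  rewrite continuity_pt_locally in Hc.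
  intros eps Heps.
  assert (HL2 : 0 < L * L) by (apply Rsqr_pos_lt; auto).
  assert (HaL : 0 < Rabs L) by (apply Rabs_pos_lt; auto).
  set (e' := Rmin (Rabs L / 2) (eps * (L * L) / 2)).
  assert (He' : 0 < e') by (unfold e'; apply Rmin_pos; nra).
  destruct (Hd e' He') as [d' Hd'].
  destruct (Hc d') as [d1 Hd1].
  assert (Hd1p := cond_pos d1). assert (Hd'p := cond_pos d').
  exists (mkposreal (Rmin r d1) (Rmin_pos _ _ Hr Hd1p)).
  intros h Hh0 Hh. simpl in Hh.
  assert (Hhr : Rabs h < r) by (eapply Rlt_le_trans; [exact Hh| apply Rmin_l]).
  assert (Hh1 : Rabs h < d1) by (eapply Rlt_le_trans; [exact Hh| apply Rmin_r]).
  assert (Hk : Rabs (g (s + h) - g s) < d').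
  { apply Hd1. unfold ball; simpl; unfold AbsRing_ball, abs, minus, plus, opp; simpl.
    replace (s + h + - s) with h by ring. auto. }
  set (k := g (s + h) - g s) in *.
  assert (Ef1 : f (g (s + h)) = s + h) by (apply Hfg; replace (s + h - s) with h by ring; auto).
  assert (Ef0 : f (g s) = s) by (apply Hfg; replace (s - s) with 0 by ring; rewrite Rabs_R0; auto).
  assert (Hk0 : k <> 0).
  { intros E. unfold k in E. assert (g (s + h) = g s) by lra.
    rewrite H in Ef1. lra. }
  specialize (Hd' k Hk0 Hk).
  replace (g s + k) with (g (s + h)) in Hd' by (unfold k; ring).
  rewrite Ef1, Ef0 in Hd'. replace (s + h - s) with h in Hd' by ring.
  set (q := h / k) in *.
  assert (Hq0 : q <> 0) by (unfold q; apply Rmult_integral_contrapositive; split; auto; apply Rinv_neq_0_compat; auto).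
  assert (Hqe : Rabs (q - L) < Rabs L / 2) by (eapply Rlt_le_trans; [exact Hd'|apply Rmin_l]).
  assert (Hqe2 : Rabs (q - L) < eps * (L * L) / 2) by (eapply Rlt_le_trans; [exact Hd'|apply Rmin_r]).
  assert (Hq : Rabs L / 2 < Rabs q).
  { pose proof (Rabs_triang (L - q) q) as H. replace (L - q + q) with L in H by ring.
    rewrite <- Rabs_Ropp in Hqe. replace (- (q - L)) with (L - q) in Hqe by ring. lra. }
  replace (k / h - / L) with ((L - q) / (q * L)).
  2:{ unfold q. field. auto. }
  unfold Rdiv. rewrite Rabs_mult, Rabs_inv, Rabs_mult.
  replace (Rabs (L - q)) with (Rabs (q - L)) by (rewrite <- Rabs_Ropp; f_equal; ring).
  assert (Hsq : Rabs L * Rabs L = L * L) by (rewrite <- Rabs_mult; apply Rabs_pos_eq; nra).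
  assert (HB : L * L / 2 < Rabs q * Rabs L) by nra.
  apply Rmult_lt_reg_r with (Rabs q * Rabs L). nra.
  rewrite Rmult_assoc, Rinv_l by nra. nra.
Qed.

Lemma trig_H p : Rabs p < PI / 2 ->
  Hf (sin p) = cos (p / 2) / cos p.
Proof.
  intros Hp. apply Rabs_def2 in Hp. pose proof PI_RGT_0.
  assert (Hc : 0 < cos (p / 2)) by (apply cos_gt_0; lra).
  assert (Hcp : 0 < cos p) by (apply cos_gt_0; lra).
  assert (Es : sin p = 2 * sin (p / 2) * cos (p / 2)) by (rewrite <- sin_2a; f_equal; field).
  assert (Ec : cos p = cos (p / 2) * cos (p / 2) - sin (p / 2) * sin (p / 2)) by (rewrite <- cos_2a; f_equal; field).
  rewrite Es, Ec. rewrite Ec in Hcp.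
  set (c := cos (p / 2)) in *. set (d := sin (p / 2)) in *.
  assert (Hcd : d * d + c * c = 1).
  { pose proof (sin2_cos2 (p / 2)). unfold Rsqr in H0. exact H0. }
  assert (H1 : 0 < c - d) by nra. assert (H2 : 0 < c + d) by nra.
  unfold Hf.
  replace (1 - 2 * d * c) with ((c - d) ^ 2) by nra.
  replace (1 + 2 * d * c) with ((c + d) ^ 2) by nra.
  rewrite !sqrt_pow2 by lra. field. nra.
Qed.

Theorem theorem2 (kappa : R) (hk : 0 < kappa < 1)
  (phi psi : R -> R) (eps : R) (heps : 0 < eps)
  (hphi0 : phi 0 = 0)
  (hphi_cont : forall s, Rabs s < eps -> continuous phi s)
  (hphi_inv : forall s, Rabs s < eps -> u_of kappa (phi s) = s)
  (hpsi0 : psi 0 = 0)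
  (hpsi_cont : forall s, Rabs s < eps -> continuous psi s)
  (hpsi : forall s, Rabs s < eps -> sin (psi s) = kappa * sin (phi s)) :
  exists delta, 0 < delta /\
    forall s, Rabs s < delta ->
      is_derive (fun t => cos (psi t)) s
        (- 2 * kappa * sin (psi s / 2) * cos (phi s)).
Proof.
  assert (H0 : Rabs 0 < eps) by (rewrite Rabs_R0; auto).
  pose proof (hpsi_cont 0 H0) as Hc.
  apply (proj2 (continuity_pt_filterlim _ _)) in Hc.
  rewrite continuity_pt_locally in Hc.
  pose proof PI_RGT_0 as HPI.
  destruct (Hc (mkposreal (PI / 2) ltac:(lra))) as [d1 Hd1]. simpl in Hd1.
  assert (Hd1p := cond_pos d1).
  assert (Hpsi_small : forall t, Rabs t < d1 -> Rabs (psi t) < PI / 2).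
  { intros t Ht. rewrite <- (Rminus_0_r (psi t)), <- hpsi0. apply Hd1.
    unfold ball; simpl; unfold AbsRing_ball, abs, minus, plus, opp; simpl.
    rewrite Ropp_0, Rplus_0_r. auto. }
  set (delta := Rmin eps d1).
  assert (Hdp : 0 < delta) by (apply Rmin_pos; auto).
  exists delta. split; auto.
  assert (Hde : forall t, Rabs t < delta -> Rabs t < eps)
    by (intros t Ht; eapply Rlt_le_trans; [exact Ht|apply Rmin_l]).
  assert (Hdd : forall t, Rabs t < delta -> Rabs t < d1)
    by (intros t Ht; eapply Rlt_le_trans; [exact Ht|apply Rmin_r]).
  assert (Ecos : forall t, Rabs t < delta ->
     cos (psi t) = sqrt (1 - (kappa * sin (phi t)) ^ 2)).
  { intros t Ht. pose proof (Hpsi_small t (Hdd t Ht)) as Hp. apply Rabs_def2 in Hp.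
    assert (0 < cos (psi t)) by (apply cos_gt_0; lra).
    rewrite <- hpsi by auto.
    pose proof (sin2_cos2 (psi t)). unfold Rsqr in H1.
    replace (1 - sin (psi t) ^ 2) with (cos (psi t) ^ 2) by nra.
    rewrite sqrt_pow2; lra. }
  intros s Hs.
  assert (Hloc : locally s (fun t => Rabs t < delta)).
  { assert (0 < delta - Rabs s) by lra.
    exists (mkposreal _ H). intros t Ht. simpl in Ht.
    unfold ball in Ht; simpl in Ht; unfold AbsRing_ball, abs, minus, plus, opp in Ht; simpl in Ht.
    pose proof (Rabs_triang (t + - s) s) as H1. rewrite Rplus_assoc, Rplus_opp_l, Rplus_0_r in H1. lra. }
  set (y := phi s).
  assert (HG : 0 < Gk kappa y) by (rewrite G_eq by auto; apply Hf_pos, ksin_lt; auto).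
  assert (Dphi : is_derive phi s (/ Gk kappa y)).
  { apply (inv_der (u_of kappa) phi s (eps - Rabs s)).
    - pose proof (Hde s Hs); lra.
    - intros t Ht. apply hphi_inv.
      pose proof (Rabs_triang (t - s) s). replace (t - s + s) with t in H by ring. lra.
    - apply hphi_cont; auto.
    - apply u_der; auto.
    - lra. }
  pose proof (ksin_lt kappa y hk) as Hky. apply Rabs_def2 in Hky.
  assert (Hpos : 0 < 1 - (kappa * sin y) ^ 2) by nra.
  assert (DK : is_derive (fun z => sqrt (1 - (kappa * sin z) ^ 2)) y
     (- (kappa ^ 2 * sin y * cos y) / sqrt (1 - (kappa * sin y) ^ 2))).
  { auto_derive. lra. replace (1 + - (kappa * sin y * (kappa * sin y * 1))) with (1 - (kappa * sin y) ^ 2) by ring. field. apply Rgt_not_eq, sqrt_lt_R0; lra. }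
  pose proof (is_derive_comp _ _ _ _ _ DK Dphi) as D.
  apply (is_derive_ext_loc (fun t => sqrt (1 - (kappa * sin (phi t)) ^ 2))).
  { eapply filter_imp; [|exact Hloc]. intros t Ht. symmetry. apply Ecos; auto. }
  replace (- 2 * kappa * sin (psi s / 2) * cos y) with
    (scal (/ Gk kappa y) (- (kappa ^ 2 * sin y * cos y) / sqrt (1 - (kappa * sin y) ^ 2)));
   [exact D|].
  unfold y. rewrite <- Ecos by auto.
  rewrite G_eq by auto.
  rewrite <- hpsi by auto.
  replace (kappa ^ 2 * sin (phi s) * cos (phi s)) with (kappa * (kappa * sin (phi s)) * cos (phi s)) by ring.
  rewrite <- hpsi by auto.
  pose proof (Hpsi_small s (Hdd s Hs)) as Hp.
  rewrite trig_H by auto.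
  apply Rabs_def2 in Hp.
  assert (Hc1 : 0 < cos (psi s / 2)) by (apply cos_gt_0; lra).
  assert (Hcp : 0 < cos (psi s)) by (apply cos_gt_0; lra).
  assert (Es : sin (psi s) = 2 * sin (psi s / 2) * cos (psi s / 2)) by (rewrite <- sin_2a; f_equal; field).
  rewrite Es. unfold scal; simpl; unfold mult; simpl. field. lra.
Qed.
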